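(* Let $A$ be a finite abelian group with Pontryagin dual $\hat A$, and let $\mu,\nu$ be probability measures on $A$ and $\hat A$ respectively. Let $(\mathcal{M},\tau)$ be a von Neumann algebra with a normal faithful tracial state and $U:A\to\mathcal{U}(\mathcal{M})$, $V:\hat A\to\mathcal{U}(\mathcal{M})$ group homomorphisms satisfying \[\int\|U(a)V(\chi)-\chi(a)V(\chi)U(a)\|_2^2\,d\mu(a)\,d\nu(\chi)\leq\varepsilon.\] Then \[\mathbf{E}_{a\in A,\chi\in\hat A}\|U(a)V(\chi)-\chi(a)V(\chi)U(a)\|_2^2\leq\kappa(\mu)\kappa(\nu)\varepsilon.\]
   Context: $\hat A$ is the group of characters (homomorphisms $A\to\{z\in\mathbf{C}:|z|=1\}$). $\|x\|_2=\tau(x^*x)^{1/2}$, $\mathbf{E}$ is the uniform average. For a probability measure $\mu$ on a finite group $G$, $\kappa(\mu)\in[0,+\infty]$ is the smallest constant $\kappa$ such that for every unitary representation $(\pi,\mathcal{H})$ of $G$ and every $\xi$, $\|\xi-P_{\mathcal{H}^\pi}\xi\|^2\leq\frac\kappa2\int\|\pi(g)\xi-\xi\|^2d\mu(g)$, with $P_{\mathcal{H}^\pi}$ the projection onto invariant vectors (if some $\kappa$ is infinite the right side is $+\infty$). *)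

(* Defs.v *)
From mathcomp Require Import all_boot all_order all_algebra all_fingroup.
From mathcomp Require Import all_classical all_reals.
From mathcomp Require Import ereal.
From mathcomp Require Import complex.

Set Implicit Arguments.
Unset Strict Implicit.
Unset Printing Implicit Defensive.

Import Order.TTheory GRing.Theory Num.Theory.
Local Open Scope ring_scope.

Section Defs.
Variable R : realType.
Local Notation C := R[i].

Definition is_prob (T : finType) (mu : T -> R) : Prop :=
  (forall t, 0 <= mu t) /\ \sum_(t : T) mu t = 1.

Definition is_inner_product (H : lmodType C) (ip : H -> H -> C) : Prop :=
  [/\ forall (a : C) (x y z : H), ip (a *: x + y) z = a * ip x z + ip y z,
      forall x y : H, ip y x = conjc (ip x y),
      forall x : H, 0 <= ip x x
    & forall x : H, ip x x = 0 -> x = 0].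

Definition hnorm2 (H : lmodType C) (ip : H -> H -> C) (x : H) : R :=
  complex.Re (ip x x).

Definition ip_complete (H : lmodType C) (ip : H -> H -> C) : Prop :=
  forall u : nat -> H,
    (forall e : R, 0 < e -> exists N : nat, forall m n : nat,
        (N <= m)%N -> (N <= n)%N -> hnorm2 ip (u m - u n) < e ^+ 2) ->
    exists l : H, forall e : R, 0 < e -> exists N : nat, forall n : nat,
        (N <= n)%N -> hnorm2 ip (u n - l) < e ^+ 2.

Definition is_hilbert (H : lmodType C) (ip : H -> H -> C) : Prop :=
  is_inner_product ip /\ ip_complete ip.

Definition unitary_rep (G : finGroupType) (H : lmodType C)
    (ip : H -> H -> C) (pi : G -> H -> H) : Prop :=
  [/\ forall g (a : C) (x y : H), pi g (a *: x + y) = a *: pi g x + pi g y,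
      forall g (x y : H), ip (pi g x) (pi g y) = ip x y,
      forall g (y : H), exists x : H, pi g x = y
    & forall g h (x : H), pi (g * h)%g x = pi g (pi h x)].

Definition invariant_vec (G : finGroupType) (H : lmodType C)
    (pi : G -> H -> H) (x : H) : Prop := forall g, pi g x = x.

(** The defining inequality of kappa for the constant k:
    ||xi - P xi||^2 <= k/2 \int ||pi(g) xi - xi||^2 dmu(g), for every unitary
    representation; P xi is the orthogonal projection onto H^pi, i.e. the
    invariant vector eta with xi - eta orthogonal to H^pi. *)
Definition kappa_ineq (G : finGroupType) (mu : G -> R) (k : R) : Prop :=
  forall (H : lmodType C) (ip : H -> H -> C) (pi : G -> H -> H),
    is_hilbert ip -> unitary_rep ip pi ->
    forall xi eta : H,
      invariant_vec pi eta ->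
      (forall zeta : H, invariant_vec pi zeta -> ip (xi - eta) zeta = 0) ->
      hnorm2 ip (xi - eta)
        <= k / 2 * \sum_(g : G) mu g * hnorm2 ip (pi g xi - xi).

(** kappa(mu) in [0, +oo]: the smallest (infimum of the) admissible constants;
    +oo if there is none. *)
Definition kappa (G : finGroupType) (mu : G -> R) : \bar R :=
  ereal_inf [set (k%:E)%E | k in [set k : R | 0 <= k /\ kappa_ineq mu k]].

Definition is_star (M : algType C) (star : M -> M) : Prop :=
  [/\ forall x y : M, star (x + y) = star x + star y,
      forall (a : C) (x : M), star (a *: x) = conjc a *: star x,
      forall x y : M, star (x * y) = star y * star x
    & forall x : M, star (star x) = x].

Definition is_faithful_tracial_state (M : algType C) (star : M -> M)
    (tau : M -> C) : Prop :=
  [/\ forall (a : C) (x y : M), tau (a *: x + y) = a * tau x + tau y,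
      forall x y : M, tau (x * y) = tau (y * x),
      tau 1 = 1,
      forall x : M, 0 <= tau (star x * x)
    & forall x : M, tau (star x * x) = 0 -> x = 0].

Definition norm2sq (M : algType C) (star : M -> M) (tau : M -> C) (x : M) : R :=
  complex.Re (tau (star x * x)).

Definition is_unitary (M : algType C) (star : M -> M) (u : M) : Prop :=
  star u * u = 1 /\ u * star u = 1.

Definition unitary_hom (G : finGroupType) (M : algType C) (star : M -> M)
    (U : G -> M) : Prop :=
  (forall g, is_unitary star (U g)) /\
  (forall g h, U (g * h)%g = U g * U h).

(** Ahat, together with the pairing chi, is the Pontryagin dual of A:
    chi identifies the group Ahat with the group of characters
    A -> {z : C | |z| = 1} (pointwise multiplication). *)
Definition is_dual_pairing (A Ahat : finGroupType) (chi : Ahat -> A -> C) : Prop :=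
  [/\ forall (x y : Ahat) (a : A), chi (x * y)%g a = chi x a * chi y a,
      forall (x : Ahat) (a b : A), chi x (a * b)%g = chi x a * chi x b,
      forall (x : Ahat) (a : A), `|chi x a| = 1,
      forall x y : Ahat, (forall a, chi x a = chi y a) -> x = y
    & forall f : A -> C, (forall a b, f (a * b)%g = f a * f b) ->
        (forall a, `|f a| = 1) -> exists x : Ahat, forall a, chi x a = f a].

End Defs.

(* Main.v *)
From mathcomp Require Import all_boot all_order all_algebra all_fingroup.
From mathcomp Require Import all_classical all_reals.
From mathcomp Require Import ereal.
From mathcomp Require Import complex.
From mathcomp Require Import all_solvable all_field all_character.
From mathcomp Require Import ring lra.
Require Import Defs.

Set Implicit Arguments.
Unset Strict Implicit.
Unset Printing Implicit Defensive.
Import Order.TTheory GRing.Theory Num.Theory.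
Local Open Scope ring_scope.
Section Cauchy.
Local Open Scope classical_set_scope.
Variable R : realType.

Lemma real_cauchy (u : nat -> R) :
  (forall e : R, 0 < e -> exists N : nat, forall m n : nat,
        (N <= m)%N -> (N <= n)%N -> `|u m - u n| < e) ->
  exists l : R, forall e : R, 0 < e -> exists N : nat, forall n : nat,
        (N <= n)%N -> `|u n - l| < e.
Proof.
move=> Hc.
pose S := [set x : R | exists N : nat, forall n, (N <= n)%N -> x <= u n].
have [N1 HN1] := Hc 1 ltr01.
have S0 : S !=set0.
  exists (u N1 - 1), N1 => n Hn.
  have := HN1 n N1 Hn (leqnn _); rewrite ltr_norml => /andP[H1 _]; lra.
have ubS : forall N, (forall m n, (N <= m)%N -> (N <= n)%N -> `|u m - u n| < 1) -> ubound S (u N + 1).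
  move=> N HN x [N' HN'].
  have := HN' (maxn N N') (leq_maxr _ _).
  have := HN (maxn N N') N (leq_maxl _ _) (leqnn _); rewrite ltr_norml => /andP[_ H2]; lra.
exists (sup S) => e e0.
have e20 : 0 < e / 2 by rewrite divr_gt0.
have [N HN] := Hc (e / 2) e20.
exists N => n Hn.
have lo : u N - e / 2 <= sup S.
  apply: sup_upper_bound; last first.
    exists N => k Hk; have := HN k N Hk (leqnn _); rewrite ltr_norml => /andP[H1 _]; lra.
  split => //; exists (u N1 + 1); exact: ubS.
have hi : sup S <= u N + e / 2.
  apply: ge_sup => // x [N' HN'].
  have := HN' (maxn N N') (leq_maxr _ _).
  have := HN (maxn N N') N (leq_maxl _ _) (leqnn _); rewrite ltr_norml => /andP[_ H2]; lra.
have := HN n N Hn (leqnn _); rewrite !ltr_norml => /andP[H1 H2].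
apply/andP; split; lra.
Qed.
End Cauchy.

Section Cplx.
Variable R : realType.
Local Notation C := R[i].

Lemma Re_mulJ (z : C) : complex.Re (z * conjc z) = complex.Re z ^+ 2 + complex.Im z ^+ 2.
Proof. by case: z => a b /=; ring. Qed.

Lemma Im_mulJ (z : C) : complex.Im (z * conjc z) = 0.
Proof. by case: z => a b /=; ring. Qed.

Definition ipC (x y : C^o) : C := x * conjc y.

Lemma ipC_inner : is_inner_product ipC.
Proof.
split.
- by move=> a x y z; rewrite /ipC /= mulrDl mulrA.
- by move=> [a b] [c d]; rewrite /ipC /=; apply/eqP; rewrite eq_complex /=; apply/andP; split; apply/eqP; ring.
- by move=> x; rewrite /ipC mulcJ_ge0.
- move=> x; rewrite /ipC => /eqP; rewrite mulf_eq0 conjc_eq0 orbb => /eqP //.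
Qed.

Lemma ReB (x y : C) : complex.Re (x - y) = complex.Re x - complex.Re y.
Proof. by case: x => a b; case: y. Qed.
Lemma ImB (x y : C) : complex.Im (x - y) = complex.Im x - complex.Im y.
Proof. by case: x => a b; case: y. Qed.

Lemma sq_lt_norm (x e : R) : 0 < e -> x ^+ 2 < e ^+ 2 -> `|x| < e.
Proof. move=> e0 H. rewrite ltr_norml. apply/andP; split; nra. Qed.

Lemma ipC_complete : ip_complete (@ipC).
Proof.
move=> u Hc.
have Hre : forall e : R, 0 < e -> exists N : nat, forall m n : nat,
        (N <= m)%N -> (N <= n)%N -> `|complex.Re (u m) - complex.Re (u n)| < e.
  move=> e e0; have [N HN] := Hc e e0; exists N => m n Hm Hn.
  have := HN m n Hm Hn; rewrite /hnorm2 /ipC Re_mulJ ReB => H.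
  apply: sq_lt_norm => //; have := sqr_ge0 (complex.Im (u m - u n)); lra.
have Him : forall e : R, 0 < e -> exists N : nat, forall m n : nat,
        (N <= m)%N -> (N <= n)%N -> `|complex.Im (u m) - complex.Im (u n)| < e.
  move=> e e0; have [N HN] := Hc e e0; exists N => m n Hm Hn.
  have := HN m n Hm Hn; rewrite /hnorm2 /ipC Re_mulJ ImB => H.
  apply: sq_lt_norm => //; have := sqr_ge0 (complex.Re (u m - u n)); lra.
have [l1 Hl1] := real_cauchy Hre.
have [l2 Hl2] := real_cauchy Him.
exists (Complex l1 l2) => e e0.
have e20 : 0 < e / 2 by rewrite divr_gt0.
have [N1 HN1] := Hl1 _ e20; have [N2 HN2] := Hl2 _ e20.
exists (maxn N1 N2) => n Hn.
rewrite /hnorm2 /ipC Re_mulJ ReB ImB /=.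
have := HN1 n (leq_trans (leq_maxl _ _) Hn).
have := HN2 n (leq_trans (leq_maxr _ _) Hn).
rewrite !ltr_norml => /andP[a1 a2] /andP[b1 b2].
set x := complex.Re (u n) - l1 in a1 a2 b1 b2 *.
set y := complex.Im (u n) - l2 in a1 a2 b1 b2 *.
have hx : x ^+ 2 < (e/2) ^+ 2 by nra.
have hy : y ^+ 2 < (e/2) ^+ 2 by nra.
have : (e / 2) ^+ 2 * 2 = e ^+ 2 / 2 by field.
have : 0 < e ^+ 2 by rewrite exprn_gt0.
lra.
Qed.

Lemma mulJ_norm (z : C) : z * conjc z = `|z| ^+ 2.
Proof.
rewrite -add_Re2_Im2; case: z => a b /=; apply/eqP; rewrite eq_complex /=.
by apply/andP; split; apply/eqP; ring.
Qed.

Definition is_char (G : finGroupType) (psi : G -> C) :=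
  (forall g h, psi (g * h)%g = psi g * psi h) /\ (forall g, `|psi g| = 1).

Lemma char_J (G : finGroupType) (psi : G -> C) : is_char psi ->
  forall g, psi g * conjc (psi g) = 1.
Proof. by case=> _ H g; rewrite mulJ_norm H expr1n. Qed.

Lemma kappa_char (G : finGroupType) (mu : G -> R) k (psi : G -> C) :
  kappa_ineq mu k -> is_char psi -> (exists g, psi g != 1) ->
  1 <= k / 2 * \sum_g mu g * hnorm2 (@ipC) (psi g - 1).
Proof.
move=> Hk Hpsi [g0 Hg0].
have Hur : unitary_rep (@ipC) (fun g (x : C^o) => (psi g * x : C^o)).
  split.
  - by move=> g a x y /=; rewrite /GRing.scale /=; ring.
  - move=> g x y; rewrite /ipC rmorphM.
    have := char_J Hpsi g; move=> H.
    transitivity ((psi g * conjc (psi g)) * (x * conjc y)); first by ring.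
    by rewrite H mul1r.
  - move=> g y; exists (conjc (psi g) * y); rewrite mulrA char_J // mul1r //.
  - by move=> g h x; rewrite (proj1 Hpsi) mulrA.
have := Hk _ (@ipC) _ (conj (@ipC_inner) ipC_complete) Hur (1 : C^o) (0 : C^o).
have inv0 : invariant_vec (fun g (x : C^o) => (psi g * x : C^o)) 0 by move=> g; rewrite mulr0.
move=> /(_ inv0) H.
have : hnorm2 (@ipC) ((1 : C^o) - 0) <= k / 2 * \sum_g mu g * hnorm2 (@ipC) (psi g * 1 - 1).
  apply: H => zeta Hz.
  have : (psi g0 - 1) * zeta = 0 by rewrite mulrBl Hz mul1r subrr.
  move/eqP; rewrite mulf_eq0 subr_eq0 (negbTE Hg0) /= => /eqP ->.
  by rewrite /ipC conjc0 mulr0.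
rewrite subr0 /hnorm2 /ipC conjc1 mulr1 /=.
by under eq_bigr do rewrite mulr1.
Qed.


Lemma conjcM' (x y : C) : conjc (x * y) = conjc x * conjc y.
Proof. case: x => a b; case: y => c d /=; apply/eqP; rewrite eq_complex /=; apply/andP; split; apply/eqP; ring. Qed.
Lemma conjcK' (x : C) : conjc (conjc x) = x.
Proof. case: x => a b /=; by rewrite opprK. Qed.

Section Chars.
Variables (G : finGroupType) (c : G -> C).
Hypothesis Hc : is_char c.

Lemma char_neq0 g : c g != 0.
Proof. by case: Hc => _ H; rewrite -normr_eq0 H oner_eq0. Qed.
Lemma char1 : c 1%g = 1.
Proof.
case: Hc => HM _; apply: (mulfI (char_neq0 1%g)); by rewrite -HM mulg1 mulr1.
Qed.
Lemma charV g : c (g^-1)%g = conjc (c g).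
Proof.
case: Hc => HM _; apply: (mulfI (char_neq0 g)); by rewrite -HM mulgV char1 (char_J Hc).
Qed.
End Chars.


End Cplx.

Section CharSep.
Variable R : realType.
Local Notation C := R[i].

Lemma C_prim (n : nat) : (n > 0)%N -> {z : C | n.-primitive_root z}.
Proof.
pose p : {poly C} := 'X^n - 1; have [r Dp] := closed_field_poly_normal p.
move=> n_gt0; apply/sigW; rewrite (monicP _) ?monicXnsubC // scale1r in Dp.
have rn1: all n.-unity_root r by apply/allP=> z; rewrite -root_prod_XsubC -Dp.
have sz_r: (n < (size r).+1)%N.
  by rewrite -(size_prod_XsubC r id) -Dp size_XnsubC.
have [|z] := hasP (has_prim_root n_gt0 rn1 _ sz_r); last by exists z.
by rewrite -separable_prod_XsubC -Dp separable_Xn_sub_1 // pnatr_eq0 -lt0n.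
Qed.

Lemma char_sep (A : finGroupType) : abelian [set: A] ->
  forall a : A, a != 1%g -> exists psi : A -> C, is_char psi /\ psi a != 1.
Proof.
move=> cA a na1.
set G := [set: A]%G.
have [i Hi] : exists i : Iirr G, a \notin cfker 'chi[G]_i.
  apply/existsP; apply: contraR na1 => /existsPn H.
  have : a \in \bigcap_i cfker 'chi[G]_i by apply/bigcapP => i _; have := H i; rewrite negbK.
  by rewrite TI_cfker_irr inE.
have lin : 'chi[G]_i \is a linear_char by move/char_abelianP: cA; apply.
set n := #|G|.
have n0 : (0 < n)%N by rewrite /n cardG_gt0.
have Hn : forall x : A, 'chi[G]_i x ^+ n = 1.
  move=> x; have Gx : x \in G by rewrite inE.
  have [q ->] : exists q, n = (#[x]%g * q)%N.
    by have /dvdnP [q Hq] := order_dvdG Gx; exists q; rewrite /n Hq mulnC.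
  by rewrite exprM lin_char_unity_root // expr1n.
have [z zp] := C_prim_root_exists n0.
have [t tp] := C_prim n0.
pose k (x : A) : 'I_n := sval (prim_rootP zp (Hn x)).
have kE : forall x, 'chi[G]_i x = z ^+ k x by move=> x; rewrite /k; case: (prim_rootP zp (Hn x)).
exists (fun x => t ^+ k x); split; first split.
- move=> x y; rewrite -exprD; apply/eqP; rewrite (eq_prim_root_expr tp) -(eq_prim_root_expr zp).
  rewrite exprD -!kE lin_charM // inE //.
- move=> x; rewrite normrX.
  have t1 : `|t| = 1.
    apply/eqP; rewrite -(pexpr_eq1 n0) // -normrX prim_expr_order // normr1 //.
  by rewrite t1 expr1n.
- apply: contra Hi => /eqP H; rewrite cfkerEirr inE lin_char1 // kE.
  by rewrite -(expr0 z) (eq_prim_root_expr zp) -(eq_prim_root_expr tp) H expr0.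
Qed.
End CharSep.

Section Alg.
Variables (R : realType) (M : algType R[i]) (star : M -> M) (tau : M -> R[i]).
Hypotheses (Hs : is_star star) (Ht : is_faithful_tracial_state star tau).
Local Notation C := R[i].

Lemma tauD x y : tau (x + y) = tau x + tau y.
Proof. by case: Ht => lin _ _ _ _; have := lin 1 x y; rewrite scale1r mul1r. Qed.
Lemma tau0 : tau 0 = 0.
Proof. have H := tauD 0 0; rewrite addr0 in H; by apply: (addrI (tau 0)); rewrite -H addr0. Qed.
Lemma tauZ a x : tau (a *: x) = a * tau x.
Proof. by case: Ht => lin _ _ _ _; have := lin a x 0; rewrite addr0 tau0 addr0. Qed.
Lemma tauN x : tau (- x) = - tau x.
Proof. by rewrite -scaleN1r tauZ mulN1r. Qed.
Lemma tauB x y : tau (x - y) = tau x - tau y.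
Proof. by rewrite tauD tauN. Qed.
Lemma tau_sum (I : finType) (F : I -> M) : tau (\sum_i F i) = \sum_i tau (F i).
Proof. exact: (big_morph tau tauD tau0). Qed.
Lemma tauC x y : tau (x * y) = tau (y * x).
Proof. by case: Ht. Qed.
Lemma tau1 : tau 1 = 1.
Proof. by case: Ht. Qed.
Lemma tau_ge0 x : 0 <= tau (star x * x).
Proof. by case: Ht. Qed.

Lemma starD x y : star (x + y) = star x + star y. Proof. by case: Hs. Qed.
Lemma starZ a x : star (a *: x) = conjc a *: star x. Proof. by case: Hs. Qed.
Lemma starM x y : star (x * y) = star y * star x. Proof. by case: Hs. Qed.
Lemma starK x : star (star x) = x. Proof. by case: Hs. Qed.
Lemma star0 : star 0 = 0.
Proof. by rewrite -(scale0r 0) starZ conjc0 !scale0r. Qed.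
Lemma starN x : star (- x) = - star x.
Proof. by rewrite -scaleN1r starZ rmorphN1 scaleN1r. Qed.
Lemma starB x y : star (x - y) = star x - star y.
Proof. by rewrite starD starN. Qed.
Lemma star_sum (I : finType) (F : I -> M) : star (\sum_i F i) = \sum_i star (F i).
Proof. exact: (big_morph star starD star0). Qed.
Lemma star1 : star 1 = 1.
Proof.
have : star 1 * star (star 1) = star (star 1 * 1) by rewrite starM.
by rewrite starK !mulr1 starK.
Qed.

Lemma ImD (x y : C) : complex.Im (x + y) = complex.Im x + complex.Im y.
Proof. by case: x => a b; case: y. Qed.

Lemma Im_tau_sq x : complex.Im (tau (star x * x)) = 0.
Proof. exact: ger0_Im (tau_ge0 x). Qed.

Lemma tau_sym x y : tau (star y * x) = conjc (tau (star x * y)).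
Proof.
have H1 : complex.Im (tau (star x * y)) + complex.Im (tau (star y * x)) = 0.
  have := Im_tau_sq (x + y).
  rewrite starD !mulrDl !mulrDr !tauD !ImD !Im_tau_sq; lra.
have H2 : complex.Im ('i%C * tau (star x * y)) + complex.Im (- 'i%C * tau (star y * x)) = 0.
  have := Im_tau_sq (x + 'i%C *: y).
  rewrite starD starZ !mulrDl !mulrDr !tauD !ImD !Im_tau_sq.
  rewrite -!scalerAl -!scalerAr !tauZ.
  rewrite mulrA.
  have -> : conjc 'i%C * 'i%C = 1 :> C by apply/eqP; rewrite eq_complex /=; apply/andP; split; apply/eqP; ring.
  rewrite mul1r Im_tau_sq.
  have -> : conjc 'i%C = - 'i%C :> C by apply/eqP; rewrite eq_complex /=; apply/andP; split; apply/eqP; ring.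
  lra.
move: H1 H2; case: (tau (star x * y)) => a b; case: (tau (star y * x)) => c d /= H1 H2.
apply/eqP; rewrite eq_complex /=; apply/andP; split; apply/eqP; lra.
Qed.

Lemma tau_star x : tau (star x) = conjc (tau x).
Proof. have H := tau_sym x 1; rewrite star1 mul1r mulr1 in H; by rewrite H conjcK. Qed.


Section UHom.
Variables (G : finGroupType) (P : G -> M).
Hypothesis HP : unitary_hom star P.

Lemma uh1 : P 1%g = 1.
Proof.
case: HP => Hu HM; case: (Hu 1%g) => H1 _.
have : star (P 1%g) * (P 1%g * P 1%g) = star (P 1%g) * P 1%g by rewrite -HM mulg1.
by rewrite mulrA H1 mul1r.
Qed.

Lemma uhV g : P (g^-1)%g = star (P g).
Proof.
case: HP => Hu HM; case: (Hu g) => H1 _.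
have : star (P g) * (P g * P (g^-1)%g) = star (P g) by rewrite -HM mulgV uh1 mulr1.
by rewrite mulrA H1 mul1r.
Qed.
End UHom.

Lemma nsq_comm (Q P : M) (c : C) : Defs.is_unitary star Q -> Defs.is_unitary star P ->
  conjc c * c = 1 ->
  norm2sq star tau (Q * P - c *: (P * Q)) =
    2 - 2 * complex.Re (c * tau (star P * star Q * P * Q)).
Proof.
move=> [HQ1 HQ2] [HP1 HP2] hc.
rewrite /norm2sq starB starZ !starM.
have t1 : star P * star Q * (Q * P) = 1 by rewrite -mulrA (mulrA (star Q)) HQ1 mul1r HP1.
have t2 : star P * star Q * (c *: (P * Q)) = c *: (star P * star Q * P * Q) by rewrite -scalerAr !mulrA.
have t3 : conjc c *: (star Q * star P) * (Q * P) = conjc c *: (star Q * star P * Q * P) by rewrite -scalerAl !mulrA.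
have t4 : conjc c *: (star Q * star P) * (c *: (P * Q)) = 1.
  by rewrite -scalerAl -scalerAr scalerA hc scale1r -mulrA (mulrA (star P)) HP1 mul1r HQ1.
rewrite mulrBl !mulrBr t1 t2 t3 t4 !tauB !tauZ tau1.
have -> : star Q * star P * Q * P = star (star P * star Q * P * Q) by rewrite !starM !starK !mulrA.
rewrite tau_star -rmorphM.
case: (c * tau (star P * star Q * P * Q)) => a b /=; ring.
Qed.

Lemma card_gt0G (G : finGroupType) : (0 < #|G|)%N.
Proof. by apply/card_gt0P; exists 1%g. Qed.

Lemma pd (G : finGroupType) (P : G -> M) (W : M) (c psi : G -> C) :
  unitary_hom star P -> is_char c -> is_char psi ->
  0 <= \sum_k c k * tau (star W * star (P k) * W * P k) * conjc (psi k).
Proof.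
move=> HP Hc Hpsi.
set F := fun k => c k * tau (star W * star (P k) * W * P k) * conjc (psi k).
pose d g := c g * conjc (psi g).
pose Z := \sum_g d g *: (star (P g) * W * P g).
have sZ : star Z = \sum_h conjc (d h) *: (star (P h) * star W * P h).
  by rewrite /Z star_sum; apply: eq_bigr => h _; rewrite starZ !starM starK mulrA.
have key : forall h g, conjc (d h) * d g * tau (star (P h) * star W * P h * (star (P g) * W * P g))
    = F (g * h^-1)%g.
  move=> h g.
  have e1 : P h * star (P g) = star (P (g * h^-1)%g) by rewrite -!(uhV HP) -(proj2 HP) invMg invgK.
  have e2 : P g * star (P h) = P (g * h^-1)%g by rewrite -(uhV HP) -(proj2 HP).
  have -> : tau (star (P h) * star W * P h * (star (P g) * W * P g))
      = tau (star W * star (P (g * h^-1)%g) * W * P (g * h^-1)%g).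
    rewrite !mulrA -(mulrA (star (P h))) -!(mulrA (star (P h) * _)) -(mulrA (star (P h))) tauC.
    by rewrite -e1 -e2 !mulrA.
  rewrite /F /d !conjcM' conjcK' (proj1 Hc) (proj1 Hpsi) (charV Hc) (charV Hpsi) conjcM' conjcK'.
  ring.
have tZ : tau (star Z * Z) = \sum_h \sum_g F (g * h^-1)%g.
  rewrite sZ /Z mulr_suml tau_sum; apply: eq_bigr => h _.
  rewrite mulr_sumr tau_sum; apply: eq_bigr => g _.
  by rewrite -scalerAl -scalerAr scalerA tauZ key.
have E : \sum_h \sum_g F (g * h^-1)%g = (\sum_k F k) *+ #|G|.
  rewrite -sumr_const; apply: eq_bigr => h _.
  by symmetry; rewrite (reindex_inj (mulIg h^-1)%g).
have := tau_ge0 Z; rewrite tZ E -mulr_natl pmulr_rge0 // ltr0n; exact: card_gt0G.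
Qed.
End Alg.

Section Fourier.
Variable R : realType.
Local Notation C := R[i].

Lemma ReD (x y : C) : complex.Re (x + y) = complex.Re x + complex.Re y.
Proof. by case: x => a b; case: y. Qed.
Lemma Re0 : complex.Re (0 : C) = 0. Proof. by []. Qed.
Lemma Re_sum (I : finType) (F : I -> C) : complex.Re (\sum_i F i) = \sum_i complex.Re (F i).
Proof. exact: (big_morph _ ReD Re0). Qed.
Lemma Re_mul_real (p w : C) : complex.Im p = 0 -> complex.Re (p * w) = complex.Re p * complex.Re w.
Proof. by case: p => a b; case: w => c d /= ->; ring. Qed.

Lemma fourier (G : finGroupType) (J : finType) (psi : J -> G -> C) (phi : G -> C)
    (mu : G -> R) (k : R) :
  (0 < #|J|)%N ->
  (forall j, is_char (psi j)) ->
  (forall g, \sum_j psi j g = if g == 1%g then #|J|%:R else 0) ->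
  (forall j, 0 <= \sum_g phi g * conjc (psi j g)) ->
  (forall j, (\sum_g complex.Re (1 - psi j g)) / #|G|%:R
              <= k * \sum_g mu g * complex.Re (1 - psi j g)) ->
  phi 1%g = 1 ->
  (\sum_g (1 - complex.Re (phi g))) / #|G|%:R
    <= k * \sum_g mu g * (1 - complex.Re (phi g)).
Proof.
move=> J0 Hch Hcol Hpd Hk phi1.
pose pc j := (\sum_g phi g * conjc (psi j g)) / #|J|%:R.
have pc_ge0 : forall j, 0 <= pc j by move=> j; rewrite divr_ge0 // ler0n.
have pcIm : forall j, complex.Im (pc j) = 0 by move=> j; exact: ger0_Im.
have pcRe : forall j, 0 <= complex.Re (pc j).
  by move=> j; have := pc_ge0 j; rewrite lecE => /andP[_].
have nJ : (#|J|%:R : C) != 0 by rewrite pnatr_eq0 -lt0n.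
have inv : forall g, phi g = \sum_j pc j * psi j g.
  move=> g.
  have E : forall j, pc j * psi j g = (\sum_h phi h * psi j (g * h^-1)%g) / #|J|%:R.
    move=> j; rewrite /pc mulrAC; congr (_ * _); rewrite mulr_suml; apply: eq_bigr => h _.
    by rewrite (proj1 (Hch j)) (charV (Hch j)); ring.
  under eq_bigr do rewrite E.
  rewrite -mulr_suml exchange_big /=.
  under eq_bigr do rewrite -mulr_sumr Hcol.
  rewrite (bigD1 g) //= mulgV eqxx big1 ?addr0; first by rewrite mulfK.
  move=> h hg; rewrite -eq_mulgV1 eq_sym (negbTE hg) mulr0 //.
have A : forall g, 1 - complex.Re (phi g) = \sum_j complex.Re (pc j) * complex.Re (1 - psi j g).
  move=> g.
  have -> : 1 - complex.Re (phi g) = complex.Re (phi 1%g - phi g) by rewrite ReB phi1.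
  rewrite !inv -sumrB Re_sum; apply: eq_bigr => j _.
  by rewrite -mulrBr Re_mul_real // (char1 (Hch j)).
under eq_bigr do rewrite A.
under [X in _ <= k * X]eq_bigr do rewrite A.
rewrite exchange_big /= mulr_suml.
under [X in _ <= k * X]eq_bigr do rewrite mulr_sumr.
rewrite exchange_big /= mulr_sumr; apply: ler_sum => j _.
rewrite -mulr_sumr -mulrA.
have -> : \sum_i mu i * (complex.Re (pc j) * complex.Re (1 - psi j i)) =
  complex.Re (pc j) * \sum_i mu i * complex.Re (1 - psi j i).
  by rewrite mulr_sumr; apply: eq_bigr => i _; ring.
rewrite [k * _]mulrCA; apply: ler_wpM2l => //.

Qed.
End Fourier.

Section Kap.
Variable R : realType.
Local Notation C := R[i].
Local Open Scope classical_set_scope.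

Lemma kappa_nonempty (G : finGroupType) (mu : G -> R) :
  kappa mu \is a fin_num -> exists k, 0 <= k /\ kappa_ineq mu k.
Proof.
move=> Hf; case: (pselect (exists k, 0 <= k /\ kappa_ineq mu k)) => // Hn.
exfalso; move: Hf; rewrite /kappa.
have -> : ereal_inf [set (k%:E)%E | k in [set k : R | 0 <= k /\ kappa_ineq mu k]] = +oo%E.
  apply/ereal_inf_pinfty => y [k Hk _]; exfalso; apply: Hn; by exists k.
by [].
Qed.

Lemma kappa_ge0 (G : finGroupType) (mu : G -> R) :
  kappa mu \is a fin_num -> 0 <= fine (kappa mu).
Proof.
move=> Hf; rewrite -lee_fin fineK //; apply: le_ereal_inf_tmp => y [k [Hk _] <-].
by rewrite lee_fin.
Qed.

Lemma kappa_bound (G : finGroupType) (mu : G -> R) (L c : R) :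
  kappa mu \is a fin_num -> 0 <= c ->
  (forall k, 0 <= k -> kappa_ineq mu k -> L <= k * c) -> L <= fine (kappa mu) * c.
Proof.
move=> Hf c0 H.
have [k0 [k00 Hk0]] := kappa_nonempty Hf.
have H0 := H k0 k00 Hk0.
case: (eqVneq c 0) => [ce|cpos].
  by rewrite ce mulr0 in H0; rewrite ce mulr0.
have cp : 0 < c by rewrite lt_def cpos c0.
rewrite -ler_pdivrMr //.
rewrite -lee_fin fineK //; apply: le_ereal_inf_tmp => y [k [Hk Hki] <-].
by rewrite lee_fin ler_pdivrMr // H.
Qed.
End Kap.

Section Main.
Variable R : realType.
Local Notation C := R[i].

Lemma sum_char0 (G : finGroupType) (psi : G -> C) g0 :
  is_char psi -> psi g0 != 1 -> \sum_g psi g = 0.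
Proof.
move=> Hc H.
have E : \sum_g psi g = psi g0 * \sum_g psi g.
  rewrite mulr_sumr (reindex_inj (mulgI g0)) /=; apply: eq_bigr => g _; exact: (proj1 Hc).
have : (1 - psi g0) * \sum_g psi g = 0 by rewrite mulrBl mul1r -E subrr.
by move/eqP; rewrite mulf_eq0 subr_eq0 eq_sym (negbTE H) /= => /eqP.
Qed.

Lemma hn_char (z : C) : `|z| = 1 -> hnorm2 (@ipC R) (z - 1) = 2 * complex.Re (1 - z).
Proof.
move=> Hz.
have H1 : complex.Re z ^+ 2 + complex.Im z ^+ 2 = 1.
  by rewrite -Re_mulJ mulJ_norm Hz expr1n.
rewrite /hnorm2 /ipC Re_mulJ ReB ImB ReB.
have -> : complex.Re (1 : C) = 1 by [].
have -> : complex.Im (1 : C) = 0 by [].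
move: H1; set a := complex.Re z; set b := complex.Im z => H1.
rewrite !expr2 in H1 *; lra.
Qed.

Lemma KH (G : finGroupType) (mu : G -> R) k (psi : G -> C) :
  kappa_ineq mu k -> is_char psi ->
  (\sum_g complex.Re (1 - psi g)) / #|G|%:R <= k * \sum_g mu g * complex.Re (1 - psi g).
Proof.
move=> Hk Hc.
case: (pselect (exists g, psi g != 1)) => [[g0 Hg0]|Hn].
  have L1 : \sum_g complex.Re (1 - psi g) = #|G|%:R.
    under eq_bigr do rewrite ReB.
    rewrite sumrB.
    have -> : complex.Re (1 : C) = 1 by [].
    rewrite sumr_const -Re_sum (sum_char0 Hc Hg0) Re0 subr0.
    by rewrite -[_ *+ _]mulr_natl mulr1.
  rewrite L1 divff ?pnatr_eq0 -?lt0n ?card_gt0G //.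
  have := kappa_char Hk Hc (ex_intro _ g0 Hg0).
  under eq_bigr do rewrite (hn_char ((proj2 Hc) _)).
  set s1 := (X in 1 <= _ * X -> _); set s2 := (X in _ <= k * X).
  have -> : s1 = 2 * s2 by rewrite /s1 /s2 mulr_sumr; apply: eq_bigr => g _; ring.
  have -> : k / 2 * (2 * s2) = k * s2 by field.
  done.
have H1 : forall g, psi g = 1 by move=> g; apply/eqP; case: (boolP (psi g == 1)) => // H; exfalso; apply: Hn; exists g.
have -> : \sum_g complex.Re (1 - psi g) = 0 by apply: big1 => g _; rewrite H1 subrr.
have -> : \sum_g mu g * complex.Re (1 - psi g) = 0 by apply: big1 => g _; rewrite H1 subrr mulr0.
by rewrite mul0r mulr0.
Qed.

Lemma col_orth (G J : finGroupType) (psi : J -> G -> C) :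
  (forall g, is_char (fun j => psi j g)) ->
  (forall g, g != 1%g -> exists j, psi j g != 1) ->
  (forall j, psi j 1%g = 1) ->
  forall g, \sum_j psi j g = if g == 1%g then #|J|%:R else 0.
Proof.
move=> Hc Hs H1 g; case: eqP => [->|/eqP ng].
  by under eq_bigr do rewrite H1; rewrite sumr_const.
have [j0 Hj0] := Hs g ng; exact: (sum_char0 (Hc g) Hj0).
Qed.
End Main.

Theorem corollary2p5 (R : realType) (A Ahat : finGroupType)
    (chi : Ahat -> A -> R[i]) (mu : A -> R) (nu : Ahat -> R)
    (M : algType R[i]) (star : M -> M) (tau : M -> R[i])
    (U : A -> M) (V : Ahat -> M) (eps : R) :
  abelian [set: A]%g ->
  is_dual_pairing chi ->
  is_prob mu -> is_prob nu ->
  is_star star -> is_faithful_tracial_state star tau ->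
  unitary_hom star U -> unitary_hom star V ->
  \sum_(a : A) \sum_(x : Ahat)
      mu a * nu x * norm2sq star tau (U a * V x - chi x a *: (V x * U a))
    <= eps ->
  kappa mu \is a fin_num -> kappa nu \is a fin_num ->
  (\sum_(a : A) \sum_(x : Ahat)
      norm2sq star tau (U a * V x - chi x a *: (V x * U a)))
    / (#|A|%:R * #|Ahat|%:R)
    <= fine (kappa mu) * fine (kappa nu) * eps.
Proof.
move=> cA Hd Hmu Hnu Hs Ht HU HV Heps Kmu Knu.
case: (Hd) => Hd1 Hd2 Hd3 Hd4 Hd5.
pose f a x := norm2sq star tau (U a * V x - chi x a *: (V x * U a)).
have chiJ : forall x a, conjc (chi x a) * chi x a = 1.
  by move=> x a; rewrite mulrC mulJ_norm Hd3 expr1n.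
have Uu := proj1 HU; have Vu := proj1 HV.
have fE : forall a x, f a x = 2 - 2 * complex.Re (chi x a * tau (star (V x) * star (U a) * V x * U a)).
  move=> a x; exact: (nsq_comm Hs Ht (Uu a) (Vu x) (chiJ x a)).
have f0 : forall a x, 0 <= f a x.
  by move=> a x; have := tau_ge0 Ht (U a * V x - chi x a *: (V x * U a)); rewrite lecE => /andP[_].
have chA : forall x, is_char (chi x) by move=> x; split; [exact: Hd2 | exact: Hd3].
have chB : forall a, is_char (fun x => chi x a) by move=> a; split; [move=> x y; exact: Hd1 | move=> x; exact: Hd3].
have n2 : (0 : R) <= 2 by [].
have SA : forall k, kappa_ineq mu k -> forall x,
    (\sum_a f a x) / #|A|%:R <= k * \sum_a mu a * f a x.
  move=> k Hk x.
  pose phi a := chi x a * tau (star (V x) * star (U a) * V x * U a).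
  have sep : forall g : A, g != 1%g -> exists j, chi j g != 1.
    move=> g ng; have [psi [Hpsi Hg]] := @char_sep R A cA g ng.
    have [j Hj] := Hd5 psi (proj1 Hpsi) (proj2 Hpsi); exists j; by rewrite Hj.
  have col := @col_orth R A Ahat (fun j g => chi j g) chB sep (fun j => char1 (chA j)).
  have phd : forall j, 0 <= \sum_g phi g * conjc (chi j g).
    move=> j; exact: (pd Hs Ht (V x) HU (chA x) (chA j)).
  have phi1 : phi 1%g = 1.
    by rewrite /phi (char1 (chA x)) (uh1 HU) (star1 Hs) !mulr1 (proj1 (Vu x)) (tau1 Ht) mul1r.
  have := @fourier R A Ahat (fun j g => chi j g) phi mu k (card_gt0G _) chA col phd (fun j => KH Hk (chA j)) phi1.
  have e1 : \sum_a f a x = 2 * \sum_a (1 - complex.Re (phi a)).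
    by rewrite mulr_sumr; apply: eq_bigr => a _; rewrite fE /phi; ring.
  have e2 : \sum_a mu a * f a x = 2 * \sum_a mu a * (1 - complex.Re (phi a)).
    by rewrite mulr_sumr; apply: eq_bigr => a _; rewrite fE /phi; ring.
  move=> H; rewrite e1 e2 -mulrA [k * (2 * _)]mulrCA; apply: ler_wpM2l => //.
have SB : forall k, kappa_ineq nu k -> forall a,
    (\sum_x f a x) / #|Ahat|%:R <= k * \sum_x nu x * f a x.
  move=> k Hk a.
  pose phi x := chi x (a^-1)%g * tau (star (U a) * star (V x) * U a * V x).
  have sep : forall x : Ahat, x != 1%g -> exists j, chi x j != 1.
    move=> x nx; case: (pselect (exists j, chi x j != 1)) => // Hn.
    exfalso; move/eqP: nx; apply; apply: Hd4 => j.
    rewrite (char1 (chB j)); apply/eqP; case: (boolP (chi x j == 1)) => // H.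
    by exfalso; apply: Hn; exists j.
  have col := @col_orth R Ahat A (fun j x => chi x j) chA sep (fun j => char1 (chB j)).
  have phd : forall j, 0 <= \sum_g phi g * conjc (chi g j).
    move=> j; exact: (pd Hs Ht (U a) HV (chB (a^-1)%g) (chB j)).
  have phi1 : phi 1%g = 1.
    by rewrite /phi (char1 (chB _)) (uh1 HV) (star1 Hs) !mulr1 (proj1 (Uu a)) (tau1 Ht) mul1r.
  have := @fourier R Ahat A (fun j x => chi x j) phi nu k (card_gt0G _) chB col phd (fun j => KH Hk (chB j)) phi1.
  have ReE : forall x, complex.Re (phi x) = complex.Re (chi x a * tau (star (V x) * star (U a) * V x * U a)).
    move=> x; rewrite /phi (charV (chA x)).
    have -> : star (U a) * star (V x) * U a * V x = star (star (V x) * star (U a) * V x * U a).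
      by rewrite !(starM Hs) !(starK Hs) !mulrA.
    rewrite (tau_star Hs Ht) -conjcM'.
    by case: (chi x a * _).
  have e1 : \sum_x f a x = 2 * \sum_x (1 - complex.Re (phi x)).
    by rewrite mulr_sumr; apply: eq_bigr => x _; rewrite fE ReE; ring.
  have e2 : \sum_x nu x * f a x = 2 * \sum_x nu x * (1 - complex.Re (phi x)).
    by rewrite mulr_sumr; apply: eq_bigr => x _; rewrite fE ReE; ring.
  move=> H; rewrite e1 e2 -mulrA [k * (2 * _)]mulrCA; apply: ler_wpM2l => //.
have mu0 := proj1 Hmu; have nu0 := proj1 Hnu.
set L := (\sum_a \sum_x f a x) / (#|A|%:R * #|Ahat|%:R).
set S := \sum_a \sum_x mu a * nu x * f a x.
have S0 : 0 <= S.
  by apply: sumr_ge0 => a _; apply: sumr_ge0 => x _; rewrite !mulr_ge0.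
have main : forall kmu knu, 0 <= kmu -> kappa_ineq mu kmu -> 0 <= knu -> kappa_ineq nu knu ->
    L <= kmu * (knu * S).
  move=> kmu knu k1 Hk1 k2 Hk2.
  have step1 : L = (\sum_x (\sum_a f a x) / #|A|%:R) / #|Ahat|%:R.
    by rewrite /L exchange_big /= invfM mulrA -mulr_suml.
  rewrite step1.
  apply: (le_trans (y := (\sum_x kmu * \sum_a mu a * f a x) / #|Ahat|%:R)).
    apply: ler_wpM2r; first by rewrite invr_ge0 ler0n.
    by apply: ler_sum => x _; apply: SA.
  have step3 : (\sum_x kmu * \sum_a mu a * f a x) / #|Ahat|%:R
      = kmu * \sum_a mu a * ((\sum_x f a x) / #|Ahat|%:R).
    rewrite -mulr_sumr -mulrA exchange_big /= mulr_suml; congr (_ * _).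
    by apply: eq_bigr => a _; rewrite -mulr_sumr mulrA.
  rewrite step3; apply: ler_wpM2l => //.
  apply: (le_trans (y := \sum_a mu a * (knu * \sum_x nu x * f a x))).
    by apply: ler_sum => a _; apply: ler_wpM2l => //; apply: SB.
  rewrite /S mulr_sumr le_eqVlt; apply/orP; left; apply/eqP; apply: eq_bigr => a _.
  rewrite mulrCA; congr (knu * _).
  by rewrite mulr_sumr; apply: eq_bigr => x _; rewrite mulrA.
have H1 : forall knu, 0 <= knu -> kappa_ineq nu knu -> L <= fine (kappa mu) * (knu * S).
  move=> knu k2 Hk2; apply: kappa_bound => //; first by rewrite mulr_ge0.
  by move=> k k1 Hk1; apply: main.
have H2 : L <= fine (kappa nu) * (fine (kappa mu) * S).
  apply: kappa_bound => //; first by rewrite mulr_ge0 // kappa_ge0.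
  by move=> k k1 Hk1; rewrite mulrCA; apply: H1.
apply: (le_trans H2).
rewrite mulrA [fine (kappa nu) * _]mulrC; apply: ler_wpM2l => //.
by rewrite mulr_ge0 // kappa_ge0.
Qed.
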